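(* Let $s, p, m, k \in \mathbb N$ with $m \geq s$. Then \begin{align*} \sum_{n=1}^\infty\frac{(-1)^{n+1}H_n^{(p,s)}}{n^{m}\binom{n+k}{k}} =\sum_{\ell_{1}=0}^{s-1} \sum_{\ell_{2}=0}^{s-1-\ell_{1}}a(s,\ell_{1},\ell_{2}) \sum_{r=1}^{k}(-1)^{r+1} r \binom{k}{r}\, S(p-\ell_{1},m-\ell_{2},1,r,1)\,, \end{align*} where $S(q,t,1,r,1)=\sum_{n=1}^\infty \frac{(-1)^{n+1}H_n^{(q)}}{n^{t}(n+r)}$. Consequently this sum can be expressed in terms of classical alternating Euler sums, zeta values and generalized (alternating) harmonic numbers.
   Context: $\mathbb N=\{1,2,\dots\}$, $\mathbb N_0=\mathbb N\cup\{0\}$. For $n\in\mathbb N_0$ and $q\in\mathbb N$, $H_n^{(q)}=\sum_{j=1}^n j^{-q}$; for an integer $q\ge 0$, $H_n^{(-q)}$ denotes $\sum_{\ell=1}^n \ell^{q}$ (so $H_n^{(0)}=n$). Generalized hyperharmonic numbers: $H_n^{(p,1)}=H_n^{(p)}$, $H_n^{(p,r)}=\sum_{j=1}^n H_j^{(p,r-1)}$ for $r\ge2$. For $q\in\mathbb Z$ and $t,r\in\mathbb N$, $S(q,t,1,r,1):=\sum_{n=1}^\infty \frac{(-1)^{n+1}H_n^{(q)}}{n^{t}(n+r)}$. Bernoulli numbers $B_j^{+}$: $\frac{x}{1-e^{-x}}=\sum_{j\ge0}B_j^{+}\frac{x^j}{j!}$. The rational coefficients $a(r,m,j)$ ($r\in\mathbb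 N$, $0\le m\le r-1$, $0\le j\le r-1-m$) are defined by $a(1,0,0)=1$ and, for $r\ge1$: $a(r+1,r,0)=-\sum_{m=0}^{r-1} \frac{a(r,m,r-m-1)}{r-m}$; $a(r+1,m,\ell)=\sum_{j=\ell-1}^{r-1-m} \frac{a(r,m,j)}{j+1} \binom{j+1}{j-\ell+1}B_{j-\ell+1}^{+}$ for $0\leq m \leq r-1$, $1\leq \ell \leq r-m$; $a(r+1,m,0)=-\sum_{y=0}^{m} \sum_{j=\max\{0, m-y-1\}}^{r-1-y}a(r,y,j)D(r,m,j,y)$ for $0\leq m \leq r-1$, where $D(r,m,j,y)=\sum_{\ell=\max\{0, m-y-1\}}^{j} \frac{1}{j+1} \binom{j+1}{j-\ell}B_{j-\ell}^{+}\binom{\ell+1}{m-y}(-1)^{1+\ell-m+y}$. (These satisfy the known identity $H_n^{(p,r)}=\sum_{m=0}^{r-1}\sum_{j=0}^{r-1-m}a(r,m,j)n^jH_n^{(p-m)}$ for all $n,p\in\mathbb N$.) *)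

(* Defs.v *)
From Stdlib Require Import Reals Arith ZArith List.
From Coquelicot Require Import Coquelicot.
Open Scope R_scope.

(* sumR lo hi f = f lo + f (lo+1) + ... + f hi  (empty if hi < lo) *)
Fixpoint sumN (f : nat -> R) (lo cnt : nat) : R :=
  match cnt with
  | O => 0
  | S c => f lo + sumN f (S lo) c
  end.
Definition sumR (lo hi : nat) (f : nat -> R) : R := sumN f lo (S hi - lo).

Definition binomR (n k : nat) : R := if (k <=? n)%nat then Binomial.C n k else 0.

(* Bernoulli numbers B_j^+ (x/(1-e^{-x}) = sum B_j^+ x^j/j!), via the
   equivalent standard recurrence sum_{i=0}^{n} C(n+1,i) B_i^+ = n+1. *)
Fixpoint bern_list (n : nat) : list R :=
  match n with
  | O => 1 :: nil
  | S n' =>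
      let l := bern_list n' in
      let s := fold_right Rplus 0
                 (map (fun i => binomR (S n) i * nth i l 0) (seq 0 n)) in
      l ++ ((INR (S n) - s) / INR (S n)) :: nil
  end.
Definition bernp (j : nat) : R := nth j (bern_list j) 0.

Definition H (n : nat) (q : Z) : R :=
  sumR 1 n (fun j => powerRZ (INR j) (- q)).

(* hh p r' n = H_n^{(p, r'+1)} *)
Fixpoint hh (p : Z) (r' : nat) (n : nat) : R :=
  match r' with
  | O => H n p
  | S r0 => sumR 1 n (fun j => hh p r0 j)
  end.
Definition hyperH (p : Z) (r n : nat) : R := hh p (r - 1) n.

(* a0 r' m j = a(r'+1, m, j) *)
Fixpoint a0 (r' : nat) (m j : nat) : R :=
  match r' with
  | O => if andb (m =? 0)%nat (j =? 0)%nat then 1 else 0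
  | S r0 =>
      let r := S r0 in
      let prev := a0 r0 in
      if (m =? r)%nat then
        (if (j =? 0)%nat then
           - sumR 0 (r - 1) (fun m' => prev m' (r - m' - 1)%nat / INR (r - m'))
         else 0)
      else if (m <=? r - 1)%nat then
        (if (j =? 0)%nat then
           - sumR 0 m (fun y =>
               sumR (m - y - 1) (r - 1 - y) (fun j' =>
                 prev y j' *
                 sumR (m - y - 1) j' (fun l =>
                   / INR (j' + 1) * binomR (j' + 1) (j' - l) * bernp (j' - l)
                   * binomR (l + 1) (m - y) * (-1) ^ (1 + l + y - m))))
         else if (j <=? r - m)%nat then
           sumR (j - 1) (r - 1 - m) (fun j' =>
             prev m j' / INR (j' + 1) * binomR (j' + 1) (j' + 1 - j)
             * bernp (j' + 1 - j))
         else 0)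
      else 0
  end.
Definition a (r m j : nat) : R := a0 (r - 1) m j.

Definition S_term (q : Z) (t r : nat) (n : nat) : R :=
  let N := S n in
  (-1) ^ (N + 1) * H N q / (INR N ^ t * (INR N + INR r)).
Definition Sser (q : Z) (t r : nat) : R := Series (S_term q t r).

(* Main.v *)
Require Import Defs.
From Stdlib Require Import Reals Arith ZArith Lia Lra List.
From Coquelicot Require Import Coquelicot.
Open Scope R_scope.

Ltac bdestr := repeat match goal with
  | |- context [Nat.leb ?a ?b] => destruct (Nat.leb_spec a b)
  | |- context [Nat.eqb ?a ?b] => destruct (Nat.eqb_spec a b)
  end; cbn [andb orb negb].

Lemma sumN_ext f g lo c : (forall i, (lo <= i < lo + c)%nat -> f i = g i) ->
  sumN f lo c = sumN g lo c.
Proof. revert lo; induction c; intros lo Hi; simpl; auto.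
  rewrite (Hi lo) by lia. rewrite (IHc (S lo)); auto. intros; apply Hi; lia. Qed.

Lemma sumN_plus f g lo c : sumN (fun i => f i + g i) lo c = sumN f lo c + sumN g lo c.
Proof. revert lo; induction c; intros lo; simpl; [lra|rewrite IHc; lra]. Qed.

Lemma sumN_scal a f lo c : sumN (fun i => a * f i) lo c = a * sumN f lo c.
Proof. revert lo; induction c; intros lo; simpl; [lra|rewrite IHc; lra]. Qed.

Lemma sumN_zero lo c : sumN (fun _ => 0) lo c = 0.
Proof. revert lo; induction c; intros lo; simpl; [lra|rewrite IHc; lra]. Qed.

Lemma sumN_last f lo c : sumN f lo (S c) = sumN f lo c + f (lo + c)%nat.
Proof. revert lo; induction c; intros lo; simpl.
  rewrite Nat.add_0_r; lra. simpl in IHc. rewrite IHc. replace (S lo + c)%nat with (lo + S c)%nat by lia. lra. Qed.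

Lemma sumN_split f lo a b : sumN f lo (a + b) = sumN f lo a + sumN f (lo + a) b.
Proof. revert lo; induction a; intros lo; simpl.
  rewrite Nat.add_0_r; lra. rewrite IHa. replace (S lo + a)%nat with (lo + S a)%nat by lia. lra. Qed.

Lemma sumN_swap (F : nat -> nat -> R) lo1 c1 lo2 c2 :
  sumN (fun i => sumN (fun j => F i j) lo2 c2) lo1 c1 =
  sumN (fun j => sumN (fun i => F i j) lo1 c1) lo2 c2.
Proof. revert lo1; induction c1; intros lo1; simpl.
  rewrite sumN_zero; auto. rewrite IHc1, <- sumN_plus. auto. Qed.

Lemma sumR_ext f g lo hi : (forall i, (lo <= i <= hi)%nat -> f i = g i) ->
  sumR lo hi f = sumR lo hi g.
Proof. intros H; unfold sumR; apply sumN_ext; intros; apply H; lia. Qed.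

Lemma sumR_plus f g lo hi : sumR lo hi (fun i => f i + g i) = sumR lo hi f + sumR lo hi g.
Proof. apply sumN_plus. Qed.
Lemma sumR_scal a f lo hi : sumR lo hi (fun i => a * f i) = a * sumR lo hi f.
Proof. apply sumN_scal. Qed.
Lemma sumR_scal_r a f lo hi : sumR lo hi (fun i => f i * a) = sumR lo hi f * a.
Proof. rewrite Rmult_comm, <- sumR_scal. apply sumR_ext; intros; lra. Qed.
Lemma sumR_opp f lo hi : sumR lo hi (fun i => - f i) = - sumR lo hi f.
Proof. replace (- sumR lo hi f) with (-1 * sumR lo hi f) by lra. rewrite <- sumR_scal.
  apply sumR_ext; intros; lra. Qed.
Lemma sumR_minus f g lo hi : sumR lo hi (fun i => f i - g i) = sumR lo hi f - sumR lo hi g.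
Proof. unfold Rminus. rewrite sumR_plus, sumR_opp. auto. Qed.
Lemma sumR_zero f lo hi : (forall i, (lo <= i <= hi)%nat -> f i = 0) -> sumR lo hi f = 0.
Proof. intros H. rewrite (sumR_ext f (fun _ => 0)) by auto. apply sumN_zero. Qed.
Lemma sumR_empty f lo hi : (hi < lo)%nat -> sumR lo hi f = 0.
Proof. intros H; unfold sumR. replace (S hi - lo)%nat with 0%nat by lia. auto. Qed.
Lemma sumR_swap (F : nat -> nat -> R) lo1 hi1 lo2 hi2 :
  sumR lo1 hi1 (fun i => sumR lo2 hi2 (fun j => F i j)) =
  sumR lo2 hi2 (fun j => sumR lo1 hi1 (fun i => F i j)).
Proof. apply sumN_swap. Qed.
Lemma sumR_last f lo hi : (lo <= S hi)%nat -> sumR lo (S hi) f = sumR lo hi f + f (S hi).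
Proof. intros H; unfold sumR. replace (S (S hi) - lo)%nat with (S (S hi - lo)) by lia.
  rewrite sumN_last. f_equal. f_equal. lia. Qed.
Lemma sumR_first f lo hi : (lo <= hi)%nat -> sumR lo hi f = f lo + sumR (S lo) hi f.
Proof. intros H; unfold sumR. replace (S hi - lo)%nat with (S (S hi - S lo)) by lia. reflexivity. Qed.
Lemma sumR_single1 f c : sumR c c f = f c.
Proof. unfold sumR. replace (S c - c)%nat with 1%nat by lia. simpl. lra. Qed.
Lemma sumR_shift f lo hi : sumR (S lo) (S hi) f = sumR lo hi (fun i => f (S i)).
Proof. unfold sumR. replace (S (S hi) - S lo)%nat with (S hi - lo)%nat by lia.
  generalize (S hi - lo)%nat. intros c; revert lo; induction c; intros lo; simpl; auto.
  rewrite IHc; auto. Qed.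

Lemma sumR_guard f lo hi K : (hi <= K)%nat ->
  sumR lo hi f = sumR 0 K (fun i : nat => if andb (lo <=? i)%nat (i <=? hi)%nat then f i else 0).
Proof. intros HK. destruct (Nat.leb_spec lo hi).
  - unfold sumR. replace (S K - 0)%nat with (lo + (S hi - lo) + (K - hi))%nat by lia.
    rewrite !sumN_split. rewrite (sumN_ext _ (fun _ => 0) 0 lo).
    2:{ intros i Hi. bdestr; auto; lia. }
    rewrite (sumN_ext _ (fun _ => 0) (0 + lo + (S hi - lo))).
    2:{ intros i Hi. bdestr; auto; lia. }
    rewrite !sumN_zero. rewrite Nat.add_0_l. rewrite (sumN_ext (fun i : nat => if ((lo <=? i) && (i <=? hi))%bool then f i else 0) f lo).
    lra. intros i Hi. bdestr; auto; lia.
  - rewrite sumR_empty by lia. symmetry; apply sumR_zero. intros; bdestr; auto; lia.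
Qed.

Lemma sumR_extend f K K' : (K <= K')%nat -> (forall i, (K < i <= K')%nat -> f i = 0) ->
  sumR 0 K f = sumR 0 K' f.
Proof. intros H1 H2. rewrite (sumR_guard f 0 K K') by auto. apply sumR_ext. intros i Hi.
  bdestr; auto; try lia. symmetry; apply H2; lia. Qed.

Lemma sumR_single f K c : (c <= K)%nat -> (forall i, (i <= K)%nat -> i <> c -> f i = 0) ->
  sumR 0 K f = f c.
Proof. intros H1 H2. rewrite <- (sumR_single1 f c). rewrite (sumR_guard f c c K) by auto.
  apply sumR_ext. intros i Hi. bdestr; auto; apply H2; lia. Qed.

Lemma sumR_tri (F : nat -> nat -> R) NN :
  sumR 0 NN (fun y => sumR 0 (NN - y) (fun u => F y u)) =
  sumR 0 NN (fun m => sumR 0 m (fun y => F y (m - y)%nat)).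
Proof. induction NN.
  - rewrite !sumR_single1. simpl. auto.
  - rewrite (sumR_last _ 0 NN) by lia. rewrite (sumR_last (fun m => sumR 0 m _) 0 NN) by lia.
    rewrite (sumR_ext (fun y => sumR 0 (S NN - y) (fun u => F y u))
       (fun y => sumR 0 (NN - y) (fun u => F y u) + F y (S NN - y)%nat)).
    2:{ intros i Hi. replace (S NN - i)%nat with (S (NN - i)) by lia. rewrite sumR_last by lia.
        f_equal. }
    rewrite sumR_plus, IHNN. replace (S NN - S NN)%nat with 0%nat by lia.
    rewrite sumR_single1. rewrite (sumR_last (fun y => F y (S NN - y)%nat)) by lia.
    replace (S NN - S NN)%nat with 0%nat by lia. lra.
Qed.

Lemma fact_neq0 n : INR (fact n) <> 0.
Proof. apply INR_fact_neq_0. Qed.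

Lemma binomR_fact n k : (k <= n)%nat ->
  binomR n k = INR (fact n) / (INR (fact k) * INR (fact (n - k))).
Proof. intros H; unfold binomR. destruct (Nat.leb_spec k n); [reflexivity|lia]. Qed.

Lemma binomR_gt n k : (n < k)%nat -> binomR n k = 0.
Proof. intros H; unfold binomR. destruct (Nat.leb_spec k n); [lia|reflexivity]. Qed.

Lemma binomR_n0 n : binomR n 0 = 1.
Proof. rewrite binomR_fact by lia. rewrite Nat.sub_0_r. simpl. field. apply fact_neq0. Qed.

Lemma binomR_nn n : binomR n n = 1.
Proof. rewrite binomR_fact by lia. rewrite Nat.sub_diag. simpl. field. apply fact_neq0. Qed.

Lemma fact_S' n : INR (fact (S n)) = INR (S n) * INR (fact n).
Proof. change (fact (S n)) with (S n * fact n)%nat. rewrite mult_INR. reflexivity. Qed.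

Lemma binomR_prod N i t : (i + t <= N)%nat ->
  binomR N i * binomR (N - i) t = binomR N t * binomR (N - t) i.
Proof. intros H. rewrite !binomR_fact by lia.
  replace (N - t - i)%nat with (N - i - t)%nat by lia.
  field. repeat split; apply fact_neq0. Qed.

Lemma binomR_I2 j t : (t <= j)%nat ->
  binomR (S j) t * INR (S j - t) / INR (S j) = binomR j t.
Proof. intros H. rewrite !binomR_fact by lia.
  replace (S j - t)%nat with (S (j - t)) by lia. rewrite !fact_S'.
  field. repeat split; try apply fact_neq0; apply not_0_INR; lia. Qed.

Lemma binomR_S_n n : binomR (S n) n = INR (S n).
Proof. rewrite binomR_fact by lia. replace (S n - n)%nat with 1%nat by lia.
  rewrite fact_S'. change (fact 1) with 1%nat. rewrite INR_1. field. apply fact_neq0. Qed.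

Lemma fold_sumN f lo c : fold_right Rplus 0 (map f (seq lo c)) = sumN f lo c.
Proof. revert lo; induction c; intros lo; simpl; auto. rewrite IHc; auto. Qed.

Lemma bern_list_len n : length (bern_list n) = S n.
Proof. induction n; simpl; auto. rewrite length_app, IHn. simpl. lia. Qed.

Lemma bern_list_S n : exists x, bern_list (S n) = bern_list n ++ x :: nil.
Proof. eexists. reflexivity. Qed.

Lemma bern_list_nth n i : (i <= n)%nat -> nth i (bern_list n) 0 = bernp i.
Proof. intros H. unfold bernp. induction n.
  - assert (i = 0)%nat by lia; subst; auto.
  - destruct (Nat.eq_dec i (S n)). subst; auto.
    destruct (bern_list_S n) as [x Hx]. rewrite Hx. rewrite app_nth1.
    apply IHn; lia. rewrite bern_list_len; lia.
Qed.

Lemma bernp_0 : bernp 0 = 1.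
Proof. reflexivity. Qed.

Lemma bernp_S n : bernp (S n) =
  (INR (S (S n)) - sumN (fun i => binomR (S (S n)) i * bernp i) 0 (S n)) / INR (S (S n)).
Proof. unfold bernp at 1. simpl bern_list. rewrite app_nth2; rewrite bern_list_len; [|lia].
  rewrite Nat.sub_diag. simpl nth. rewrite fold_sumN. f_equal. f_equal.
  rewrite (sumN_ext (fun i => binomR (S (S n)) i * bernp i) (fun i => binomR (S (S n)) i * nth i (bern_list n) 0)).
  reflexivity. intros i Hi. rewrite bern_list_nth by lia. reflexivity. Qed.

Lemma bern_rec n : sumR 0 n (fun i => binomR (S n) i * bernp i) = INR (S n).
Proof. destruct n.
  - rewrite sumR_single1. rewrite binomR_n0, bernp_0. simpl; lra.
  - rewrite sumR_last by lia. rewrite binomR_S_n. rewrite bernp_S.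
    unfold sumR. replace (S n - 0)%nat with (S n) by lia. field.
    apply not_0_INR; lia.
Qed.

Lemma sumR_reflect f n : sumR 0 n f = sumR 0 n (fun i => f (n - i)%nat).
Proof. revert f; induction n; intros f.
  - rewrite !sumR_single1. auto.
  - rewrite sumR_first by lia. rewrite sumR_shift. rewrite IHn.
    rewrite (sumR_last (fun i => f (S n - i)%nat)) by lia. rewrite Nat.sub_diag.
    rewrite (sumR_ext (fun i => f (S (n - i))) (fun i => f (S n - i)%nat)). lra.
    intros; f_equal; lia. Qed.

Lemma sum_f_R0_sumR f n : sum_f_R0 f n = sumR 0 n f.
Proof. induction n; simpl. rewrite sumR_single1; auto. rewrite sumR_last by lia. rewrite IHn; auto. Qed.

Lemma sumR_tri_swap (F : nat -> nat -> R) n :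
  sumR 0 n (fun i => sumR 0 (n - i) (fun t => F i t)) =
  sumR 0 n (fun t => sumR 0 (n - t) (fun i => F i t)).
Proof.
  rewrite (sumR_ext _ (fun i => sumR 0 n (fun t => if andb (0 <=? t)%nat (t <=? n - i)%nat then F i t else 0))).
  2:{ intros i Hi. apply sumR_guard. lia. }
  rewrite sumR_swap. apply sumR_ext. intros t Ht. rewrite (sumR_guard _ 0 (n - t) n) by lia.
  apply sumR_ext. intros i Hi. bdestr; auto; lia. Qed.

Definition cc (j l : nat) : R := / INR (j+1) * binomR (j+1) (j+1-l) * bernp (j+1-l).
Definition Pf (j : nat) (x : R) : R := sumR 1 (S j) (fun l => cc j l * x ^ l).
Definition Qf (j : nat) (x : R) : R :=
  sumR 0 j (fun i => / INR (j+1) * binomR (j+1) i * bernp i * x ^ (S j - i)).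

Lemma Pf_Qf j x : Pf j x = Qf j x.
Proof. unfold Pf, Qf. rewrite sumR_shift, sumR_reflect. apply sumR_ext. intros i Hi.
  unfold cc. replace (j + 1 - S (j - i))%nat with i by lia.
  replace (S (j - i)) with (S j - i)%nat by lia. reflexivity. Qed.

Lemma pow_expand x M : (x + 1) ^ (S M) - x ^ (S M) = sumR 0 M (fun t => binomR (S M) t * x ^ t).
Proof. rewrite binomial, sum_f_R0_sumR. rewrite sumR_last by lia.
  replace (S M - S M)%nat with 0%nat by lia.
  unfold Binomial.C at 2. rewrite Nat.sub_diag. simpl pow.
  assert (E: INR (fact (S M)) / (INR (fact (S M)) * INR (fact 0)) = 1).
  { simpl (fact 0). rewrite INR_1. field. apply fact_neq0. }
  rewrite E. ring_simplify. apply sumR_ext. intros t Ht. rewrite pow1.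
  unfold binomR. destruct (Nat.leb_spec t (S M)); [|lia]. ring. Qed.

Lemma Faulhaber j x : Qf j (x + 1) - Qf j x = (x + 1) ^ j.
Proof. unfold Qf. rewrite <- sumR_minus.
  rewrite (sumR_ext _ (fun i => sumR 0 (j - i) (fun t =>
     / INR (j+1) * binomR (j+1) i * bernp i * (binomR (S (j - i)) t * x ^ t)))).
  2:{ intros i Hi. rewrite <- Rmult_minus_distr_l. replace (S j - i)%nat with (S (j - i)) by lia.
      rewrite pow_expand. rewrite <- sumR_scal. reflexivity. }
  rewrite sumR_tri_swap. rewrite binomial, sum_f_R0_sumR. apply sumR_ext. intros t Ht.
  rewrite (sumR_ext _ (fun i => (/ INR (j+1) * binomR (j+1) t * x ^ t) *
     (binomR (S (j - t)) i * bernp i))).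
  2:{ intros i Hi. replace (S (j - i)) with (j + 1 - i)%nat by lia.
      transitivity ((/ INR (j+1) * bernp i * x ^ t) * (binomR (j + 1) i * binomR (j + 1 - i) t)).
      ring.
      rewrite binomR_prod by lia. replace (j + 1 - t)%nat with (S (j - t)) by lia. ring. }
  rewrite sumR_scal, bern_rec. rewrite pow1. rewrite Rmult_1_r. 
  replace (Binomial.C j t) with (binomR j t) by (unfold binomR; destruct (Nat.leb_spec t j); [auto|lia]).
  rewrite <- (binomR_I2 j t) by lia.
  replace (j + 1)%nat with (S j) by lia. replace (S (j - t)) with (S j - t)%nat by lia.
  field. apply not_0_INR; lia. Qed.

Lemma Pf_diff j x : Pf j (x + 1) - Pf j x = (x + 1) ^ j.
Proof. rewrite !Pf_Qf. apply Faulhaber. Qed.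

Lemma Pf_0 j : Pf j 0 = 0.
Proof. unfold Pf. apply sumR_zero. intros i Hi. destruct i; [lia|]. simpl. ring. Qed.

Lemma H_S n q : H (S n) q = H n q + powerRZ (INR (S n)) (- q).
Proof. unfold H. rewrite sumR_last by lia. reflexivity. Qed.

Lemma H_0 q : H 0 q = 0.
Proof. unfold H. apply sumR_empty. lia. Qed.

Lemma lemB1 j q n :
  sumR 1 n (fun i => INR i ^ j * H i q) =
  Pf j (INR n) * H n q - sumR 1 n (fun t => powerRZ (INR t) (- q) * Pf j (INR t - 1)).
Proof. induction n.
  - rewrite !sumR_empty by lia. rewrite H_0. lra.
  - rewrite !sumR_last by lia. rewrite IHn. rewrite H_S.
    replace (INR (S n) - 1) with (INR n) by (rewrite S_INR; lra).
    assert (E := Pf_diff j (INR n)). rewrite <- S_INR in E. replace (Pf j (INR (S n))) with (Pf j (INR n) + INR (S n) ^ j) by lra. ring. Qed.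

Definition Dp (j u : nat) : R := sumR 1 (S j) (fun l => cc j l * binomR l u * (-1) ^ (l - u)).

Lemma binom_m1 y l : (y - 1) ^ l = sumR 0 l (fun u => binomR l u * y ^ u * (-1) ^ (l - u)).
Proof. replace (y - 1) with (y + -1) by ring. rewrite binomial, sum_f_R0_sumR.
  apply sumR_ext. intros u Hu. unfold binomR. destruct (Nat.leb_spec u l); [auto|lia]. Qed.

Lemma powerRZ_shift t q u : (1 <= t)%nat ->
  powerRZ (INR t) (- q) * INR t ^ u = powerRZ (INR t) (- (q - Z.of_nat u)).
Proof. intros Ht. rewrite pow_powerRZ. rewrite <- powerRZ_add. f_equal; lia.
  apply not_0_INR; lia. Qed.

Lemma lemB2 j q n :
  sumR 1 n (fun t => powerRZ (INR t) (- q) * Pf j (INR t - 1)) =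
  sumR 0 (S j) (fun u => Dp j u * H n (q - Z.of_nat u)).
Proof.
  unfold Pf, Dp, H.
  rewrite (sumR_ext _ (fun t => sumR 1 (S j) (fun l => sumR 0 (S j) (fun u =>
     cc j l * binomR l u * (-1) ^ (l - u) * powerRZ (INR t) (- (q - Z.of_nat u)))))).
  2:{ intros t Ht. rewrite <- sumR_scal. apply sumR_ext. intros l Hl.
      rewrite binom_m1. rewrite (sumR_extend _ l (S j)) by (try lia; intros; rewrite binomR_gt by lia; ring).
      rewrite <- sumR_scal, <- sumR_scal. apply sumR_ext. intros u Hu.
      rewrite <- powerRZ_shift by lia. ring. }
  rewrite sumR_swap. rewrite (sumR_ext (fun l => sumR 1 n _) (fun l => sumR 0 (S j) (fun u => sumR 1 n (fun t =>
     cc j l * binomR l u * (-1) ^ (l - u) * powerRZ (INR t) (- (q - Z.of_nat u)))))).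
  2:{ intros; apply sumR_swap. }
  rewrite sumR_swap. apply sumR_ext. intros u Hu. rewrite <- sumR_scal_r. apply sumR_ext.
  intros l Hl. rewrite <- sumR_scal. reflexivity. Qed.

Lemma lemB j q n :
  sumR 1 n (fun i => INR i ^ j * H i q) =
  Pf j (INR n) * H n q - sumR 0 (S j) (fun u => Dp j u * H n (q - Z.of_nat u)).
Proof. rewrite lemB1, lemB2. reflexivity. Qed.

Definition Dform (j' y m : nat) : R :=
  sumR (m - y - 1) j' (fun l =>
       / INR (j' + 1) * binomR (j' + 1) (j' - l) * bernp (j' - l)
       * binomR (l + 1) (m - y) * (-1) ^ (1 + l + y - m)).

Lemma a0_S r0 m j : a0 (S r0) m j =
  if (m =? S r0)%nat then
    (if (j =? 0)%nat then - sumR 0 r0 (fun m' => a0 r0 m' (S r0 - m' - 1) / INR (S r0 - m')) else 0)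
  else if (m <=? r0)%nat then
    (if (j =? 0)%nat then
       - sumR 0 m (fun y => sumR (m - y - 1) (r0 - y) (fun j' => a0 r0 y j' * Dform j' y m))
     else if (j <=? S r0 - m)%nat then
       sumR (j - 1) (r0 - m) (fun j' => a0 r0 m j' * cc j' j)
     else 0)
  else 0.
Proof. cbn [a0]. replace (S r0 - 1)%nat with r0 by lia. unfold Dform, cc.
  destruct (m =? S r0)%nat; auto. destruct (m <=? r0)%nat; auto. destruct (j =? 0)%nat; auto.
  destruct (j <=? S r0 - m)%nat; auto. apply sumR_ext. intros. unfold Rdiv.
  ring. Qed.

Lemma a0_zero r' m j : (r' < m + j)%nat -> a0 r' m j = 0.
Proof. intros Hl. destruct r' as [|r0].
  - simpl. destruct m; destruct j; simpl; auto; lia.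
  - rewrite a0_S. bdestr; auto; lia. Qed.

Lemma sumR_guard_hi f lo hi K : (hi <= K)%nat ->
  sumR lo hi f = sumR lo K (fun i => if (i <=? hi)%nat then f i else 0).
Proof. intros HK. rewrite (sumR_guard f lo hi K HK). rewrite (sumR_guard _ lo K K) by lia.
  apply sumR_ext; intros i Hi. bdestr; auto; lia. Qed.

Lemma Dp_zero j u : (S j < u)%nat -> Dp j u = 0.
Proof. intros H. unfold Dp. apply sumR_zero. intros l Hl. rewrite binomR_gt by lia. ring. Qed.

Lemma Dp_top j : Dp j (S j) = / INR (S j).
Proof. unfold Dp. rewrite sumR_last by lia. rewrite sumR_zero.
  2:{ intros l Hl. rewrite binomR_gt by lia. ring. }
  rewrite binomR_nn, Nat.sub_diag. unfold cc. replace (j + 1 - S j)%nat with 0%nat by lia.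
  rewrite binomR_n0, bernp_0. replace (j+1)%nat with (S j) by lia. simpl. ring. Qed.

Lemma Dform_Dp j' y m : (y <= m)%nat -> Dform j' y m = Dp j' (m - y).
Proof. intros Hym. unfold Dform, Dp. rewrite sumR_shift.
  rewrite (sumR_guard _ (m - y - 1) j' j') by lia.
  apply sumR_ext. intros l Hl. bdestr; try lia.
  - unfold cc. replace (j' + 1 - S l)%nat with (j' - l)%nat by lia.
    replace (l + 1)%nat with (S l) by lia. replace (1 + l + y - m)%nat with (S l - (m - y))%nat by lia.
    ring.
  - rewrite binomR_gt by lia. ring.
Qed.

Lemma a0_Sj r' m j : (1 <= j)%nat -> (m <= r')%nat ->
  a0 (S r') m j = sumR 0 r' (fun j' => if (j <=? S j')%nat then a0 r' m j' * cc j' j else 0).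
Proof. intros Hj Hm. rewrite a0_S. bdestr; try lia.
  - rewrite (sumR_guard _ (j - 1) (r' - m) r') by lia. apply sumR_ext. intros i Hi.
    bdestr; auto; try lia. rewrite a0_zero by lia. ring.
  - symmetry. apply sumR_zero. intros i Hi. bdestr; auto. rewrite a0_zero by lia. ring.
Qed.

Lemma a0_S0 r' m : (m <= S r')%nat ->
  a0 (S r') m 0 = - sumR 0 m (fun y => sumR 0 r' (fun j' => a0 r' y j' * Dp j' (m - y))).
Proof. intros Hm. rewrite a0_S. change ((0 =? 0)%nat) with true.
  destruct (Nat.eq_dec m (S r')) as [E|Hne].
  - subst m. rewrite Nat.eqb_refl. cbv beta iota. f_equal. rewrite sumR_last by lia.
    rewrite (sumR_zero (fun j' => a0 r' (S r') j' * _)).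
    2:{ intros; rewrite a0_zero by lia; ring. }
    rewrite Rplus_0_r. apply sumR_ext. intros y Hy.
    rewrite (sumR_single _ r' (r' - y)).
    2: lia.
    2:{ intros i Hi Hne.
      destruct (Nat.leb_spec i (r' - y)); [rewrite Dp_zero by lia | rewrite a0_zero by lia]; ring. }
    replace (S r' - y)%nat with (S (r' - y)) by lia. rewrite Dp_top.
    replace (S (r' - y) - 1)%nat with (r' - y)%nat by lia. reflexivity.
  - rewrite (proj2 (Nat.eqb_neq _ _) Hne). replace ((m <=? r')%nat) with true by (symmetry; apply Nat.leb_le; lia).
    cbv beta iota. f_equal. apply sumR_ext. intros y Hy.
    rewrite (sumR_guard _ (m - y - 1) (r' - y) r') by lia. apply sumR_ext. intros i Hi.
    bdestr.
    + rewrite Dform_Dp by lia. reflexivity.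
    + rewrite a0_zero by lia; ring.
    + rewrite Dp_zero by lia; ring.
    + lia.
Qed.

Definition RS (K r' : nat) (p : Z) (n : nat) : R :=
  sumR 0 K (fun m => sumR 0 K (fun j => a0 r' m j * INR n ^ j * H n (p - Z.of_nat m))).

Lemma step1 r' p n : (forall i, hh p r' i = RS r' r' p i) ->
  hh p (S r') n =
  sumR 0 r' (fun y => sumR 0 r' (fun j => a0 r' y j * (Pf j (INR n) * H n (p - Z.of_nat y)))) -
  sumR 0 r' (fun y => sumR 0 r' (fun j => a0 r' y j *
      sumR 0 (S j) (fun u => Dp j u * H n (p - Z.of_nat y - Z.of_nat u)))).
Proof. intros IH. change (hh p (S r') n) with (sumR 1 n (fun i => hh p r' i)).
  rewrite (sumR_ext _ _ _ _ (fun i _ => IH i)). unfold RS.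
  rewrite sumR_swap. rewrite <- sumR_minus. apply sumR_ext. intros y Hy.
  rewrite sumR_swap. rewrite <- sumR_minus. apply sumR_ext. intros j Hj.
  rewrite <- Rmult_minus_distr_l. rewrite <- lemB. rewrite <- sumR_scal.
  apply sumR_ext; intros; ring. Qed.

Lemma step2 r' p n : RS (S r') (S r') p n =
  sumR 0 (S r') (fun m => a0 (S r') m 0 * H n (p - Z.of_nat m)) +
  sumR 0 (S r') (fun m => sumR 1 (S r') (fun j => a0 (S r') m j * INR n ^ j * H n (p - Z.of_nat m))).
Proof. unfold RS. rewrite <- sumR_plus. apply sumR_ext. intros m Hm.
  rewrite sumR_first by lia. simpl pow. ring. Qed.

Lemma step3 r' p n :
  sumR 0 (S r') (fun m => sumR 1 (S r') (fun j => a0 (S r') m j * INR n ^ j * H n (p - Z.of_nat m))) =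
  sumR 0 r' (fun y => sumR 0 r' (fun j => a0 r' y j * (Pf j (INR n) * H n (p - Z.of_nat y)))).
Proof. rewrite sumR_last by lia.
  rewrite (sumR_zero (fun j => a0 (S r') (S r') j * INR n ^ j * H n (p - Z.of_nat (S r')))) by (intros; rewrite a0_zero by lia; ring).
  rewrite Rplus_0_r. apply sumR_ext. intros m Hm.
  rewrite (sumR_ext _ (fun j => sumR 0 r' (fun j' => (if (j <=? S j')%nat then a0 r' m j' * cc j' j else 0)
                                   * INR n ^ j * H n (p - Z.of_nat m)))).
  2:{ intros j Hj. rewrite a0_Sj by lia. rewrite <- sumR_scal_r, <- sumR_scal_r. reflexivity. }
  rewrite (sumR_ext (fun j => a0 r' m j * _) (fun j' => sumR 1 (S r') (fun j =>
      (if (j <=? S j')%nat then a0 r' m j' * cc j' j else 0) * INR n ^ j * H n (p - Z.of_nat m)))).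
  2:{ intros j' Hj'. unfold Pf. rewrite (sumR_guard_hi _ 1 (S j') (S r')) by lia.
      rewrite <- sumR_scal_r, <- sumR_scal. apply sumR_ext. intros j Hj.
      destruct (Nat.leb_spec j (S j')); ring. }
  rewrite sumR_swap. reflexivity. Qed.

Lemma step4 r' p n :
  sumR 0 (S r') (fun m => a0 (S r') m 0 * H n (p - Z.of_nat m)) =
  - sumR 0 r' (fun y => sumR 0 r' (fun j => a0 r' y j *
      sumR 0 (S j) (fun u => Dp j u * H n (p - Z.of_nat y - Z.of_nat u)))).
Proof.
  set (F := fun y u => sumR 0 r' (fun j => a0 r' y j * Dp j u * H n (p - Z.of_nat y - Z.of_nat u))).
  transitivity (- sumR 0 (S r') (fun m => sumR 0 m (fun y => F y (m - y)%nat))).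
  { rewrite <- sumR_opp. apply sumR_ext. intros m Hm. rewrite a0_S0 by lia.
    rewrite Ropp_mult_distr_l_reverse. f_equal. rewrite <- sumR_scal_r. apply sumR_ext.
    intros y Hy. unfold F. rewrite <- sumR_scal_r. apply sumR_ext. intros j Hj.
    replace (p - Z.of_nat y - Z.of_nat (m - y))%Z with (p - Z.of_nat m)%Z by lia. ring. }
  rewrite <- sumR_tri. f_equal.
  rewrite (sumR_extend _ r' (S r')).
  2: lia.
  2:{ intros i Hi. apply sumR_zero. intros j Hj. rewrite a0_zero by lia. ring. }
  apply sumR_ext. intros y Hy. unfold F. rewrite sumR_swap. apply sumR_ext. intros j Hj.
  destruct (Nat.leb_spec (y + j) r').
  - rewrite (sumR_extend _ (S j) (S r' - y)). 2: lia. 2:{ intros. rewrite Dp_zero by lia; ring. }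
    rewrite <- sumR_scal. apply sumR_ext; intros; ring.
  - rewrite a0_zero by lia. rewrite sumR_zero; [ring|intros; ring].
Qed.

Lemma lemA r' p n : hh p r' n = RS r' r' p n.
Proof. revert n; induction r'; intros n.
  - unfold RS. rewrite !sumR_single1. simpl. replace (p - 0)%Z with p by lia. ring.
  - rewrite step1 by auto. rewrite step2, step3, step4. ring. Qed.

Lemma binomR_pos n k : (k <= n)%nat -> 0 < binomR n k.
Proof. intros H. rewrite binomR_fact by auto. apply Rdiv_lt_0_compat.
  apply lt_0_INR, lt_O_fact. apply Rmult_lt_0_compat; apply lt_0_INR, lt_O_fact. Qed.

Lemma binomR_shiftN N k : binomR (N + S k) (S k) = INR (S N) / INR (S k) * binomR (S N + k) k.
Proof. rewrite !binomR_fact by lia.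
  replace (N + S k - S k)%nat with N by lia. replace (S N + k - k)%nat with (S N) by lia.
  replace (S N + k)%nat with (N + S k)%nat by lia. rewrite !fact_S'.
  field. repeat split; try apply fact_neq0; apply not_0_INR; lia. Qed.

Lemma binomR_absorb k r : (r <= k)%nat -> INR (S r) * binomR (S k) (S r) = INR (S k) * binomR k r.
Proof. intros H. rewrite !binomR_fact by lia. replace (S k - S r)%nat with (k - r)%nat by lia.
  rewrite !fact_S'. field. repeat split; try apply fact_neq0; apply not_0_INR; lia. Qed.

Lemma alt_binom k : (1 <= k)%nat -> sumR 1 k (fun r => (-1) ^ (r + 1) * binomR k r) = 1.
Proof. intros Hk. assert (E := binomial (-1) 1 k). rewrite sum_f_R0_sumR in E.
  replace (-1 + 1) with 0 in E by ring. rewrite pow_i in E by lia.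
  rewrite sumR_first in E by lia. simpl pow in E. rewrite Nat.sub_0_r in E.
  unfold Binomial.C at 1 in E. rewrite Nat.sub_0_r in E. simpl fact in E.
  rewrite (sumR_ext _ (fun r => - (Binomial.C k r * (-1) ^ r * 1 ^ (k - r)))).
  2:{ intros r Hr. rewrite pow1. unfold binomR. destruct (Nat.leb_spec r k); [|lia].
      rewrite pow_add. ring. }
  rewrite sumR_opp. assert (INR (fact k) / (INR 1 * INR (fact k)) = 1).
  { rewrite INR_1. field. apply fact_neq0. }
  rewrite pow1 in E. lra. Qed.

Lemma lemC k N : (1 <= k)%nat ->
  / binomR (N + k) k = sumR 1 k (fun r => (-1) ^ (r + 1) * INR r * binomR k r / (INR N + INR r)).
Proof. intros Hk. revert N. induction k as [|k IH]; [lia|]. intros N.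
  destruct k as [|k0].
  - rewrite sumR_single1. replace (N + 1)%nat with (S N) by lia.
    rewrite binomR_fact by lia. replace (S N - 1)%nat with N by lia. rewrite binomR_nn.
    rewrite fact_S'. change (fact 1) with 1%nat. rewrite S_INR. simpl. field.
    pose proof (pos_INR N). repeat split; first [apply fact_neq0 | lra].
  - set (k := S k0) in *. assert (Hk1 : (1 <= k)%nat) by (unfold k; lia).
    rewrite binomR_shiftN. rewrite Rinv_mult. rewrite Rinv_div.
    rewrite (IH Hk1 (S N)).
    set (g := fun r => (-1) ^ (r + 1) * INR r * binomR (S k) r / (INR N + INR r)).
    rewrite (sumR_first g 1 (S k)) by lia. rewrite (sumR_shift g 1 k). unfold g at 1.
    assert (HN : 0 < INR (S N)) by (apply lt_0_INR; lia).
    rewrite (sumR_ext (fun r => g (S r))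
        (fun r => - ((-1) ^ (r + 1) * INR (S k) * binomR k r / (INR (S N) + INR r)))).
    2:{ intros r Hr. unfold g. rewrite Rmult_assoc, binomR_absorb by lia. rewrite !S_INR.
        replace (S r + 1)%nat with (S (r + 1)) by lia. simpl pow. field.
        pose proof (pos_INR N); pose proof (pos_INR r). lra. }
    rewrite sumR_opp.
    replace (INR 1) with 1 by auto. rewrite binomR_fact by lia.
    replace (S k - 1)%nat with k by lia. rewrite fact_S'. change (fact 1) with 1%nat.
    assert (E := alt_binom k Hk1).
    transitivity (INR (S k) / INR (S N) * sumR 1 k (fun r => (-1) ^ (r + 1) * binomR k r)
       - sumR 1 k (fun r => (-1) ^ (r + 1) * INR (S k) * binomR k r / (INR (S N) + INR r))).
    + rewrite <- sumR_scal, <- sumR_scal, <- sumR_minus. apply sumR_ext. intros r Hr.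
      rewrite S_INR in HN. rewrite (S_INR N).
      field. pose proof (pos_INR N); pose proof (pos_INR r). lra.
    + rewrite E. simpl pow. rewrite (S_INR N). rewrite S_INR in HN. rewrite INR_1. field.
      repeat split; first [apply fact_neq0 | lra].
Qed.

Lemma tele_ex (u : nat -> R) : (forall n, u (S n) <= u n) -> (forall n, 0 <= u n) ->
  ex_series (fun n => u n - u (S n)).
Proof. intros Hd Hp. destruct (ex_finite_lim_seq_decr u 0 Hd Hp) as [l Hl].
  exists (u 0%nat - l). 
  assert (E : forall n, sum_n (fun k => u k - u (S k)) n = u 0%nat - u (S n)).
  { induction n. rewrite sum_O. auto. rewrite sum_Sn, IHn. change plus with Rplus. simpl. ring. }
  change (is_lim_seq (sum_n (fun k => u k - u (S k))) (u 0%nat - l)).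
  apply (is_lim_seq_ext (fun n => u 0%nat - u (S n))). intros; rewrite E; auto.
  apply is_lim_seq_minus'. apply is_lim_seq_const. apply (is_lim_seq_incr_1 u l). auto. Qed.

Lemma sumN_le f g lo c : (forall i, (lo <= i < lo + c)%nat -> f i <= g i) -> sumN f lo c <= sumN g lo c.
Proof. revert lo. induction c; intros lo Hi; simpl.
  lra. apply Rplus_le_compat. apply Hi; lia. apply IHc. intros; apply Hi; lia. Qed.
Lemma sumR_le f g lo hi : (forall i, (lo <= i <= hi)%nat -> f i <= g i) -> sumR lo hi f <= sumR lo hi g.
Proof. intros Hi. apply sumN_le. intros; apply Hi; lia. Qed.
Lemma sumR_const1 c n : sumR 1 n (fun _ => c) = INR n * c.
Proof. induction n. rewrite sumR_empty by lia. simpl; ring.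
  rewrite sumR_last by lia. rewrite IHn, S_INR. ring. Qed.

Lemma powerRZ_m1 x : powerRZ x (-1) = / x.
Proof. simpl. rewrite Rmult_1_r. auto. Qed.

Lemma H_nonneg n q : 0 <= H n q.
Proof. unfold H. rewrite <- (sumR_zero (fun _ => 0) 1 n) by auto. apply sumR_le. intros i Hi. apply powerRZ_le. apply lt_0_INR; lia. Qed.

Lemma H1_ge1 n : 1 <= H (S n) 1.
Proof. induction n. unfold H. rewrite sumR_single1. rewrite powerRZ_m1. rewrite INR_1, Rinv_1. lra.
  rewrite H_S. match goal with |- context[powerRZ ?x ?z] => assert (0 <= powerRZ x z) end.
  apply powerRZ_le; apply lt_0_INR; lia. lra. Qed.

Definition ww n := H (S n) 1 / INR (S n).
Definition vv n := / INR (S n).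

Lemma ww_diff n : ww n - ww (S n) = H (S n) 1 / (INR (S n) * INR (S (S n))) - / (INR (S (S n)) * INR (S (S n))).
Proof. unfold ww. rewrite (H_S (S n)). rewrite powerRZ_m1.
  assert (0 < INR (S n)) by (apply lt_0_INR; lia). rewrite (S_INR (S n)). field. lra. Qed.

Lemma vv_diff n : vv n - vv (S n) = / (INR (S n) * INR (S (S n))).
Proof. unfold vv. assert (0 < INR (S n)) by (apply lt_0_INR; lia). rewrite (S_INR (S n)). field. lra. Qed.

Lemma div_le_helper X Y D E : 0 < D -> 0 < E -> X * E <= Y * D -> X / D <= Y / E.
Proof. intros HD HE Hle. unfold Rdiv.
  replace (X * / D) with ((X * E) * / (D * E)) by (field; lra).
  replace (Y * / E) with ((Y * D) * / (D * E)) by (field; lra).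
  apply Rmult_le_compat_r; auto. left; apply Rinv_0_lt_compat, Rmult_lt_0_compat; auto. Qed.

Lemma bound_main n : H (S n) 1 / (INR (S n) * INR (S n)) <= 2 * (ww n - ww (S n)) + 2 * (vv n - vv (S n)).
Proof. rewrite ww_diff, vv_diff. set (N := INR (S n)). set (H1 := H (S n) 1).
  assert (HN : 1 <= N) by (unfold N; rewrite S_INR; pose proof (pos_INR n); lra).
  assert (HH : 1 <= H1) by apply H1_ge1.
  rewrite (S_INR (S n)). fold N.
  assert (E1 : H1 / (N * N) <= 2 * (H1 / (N * (N + 1)))).
  { replace (2 * (H1 / (N * (N + 1)))) with ((2 * H1) / (N * (N + 1))) by (field; lra).
    apply div_le_helper; try nra.
    assert (0 <= H1 * N * (N - 1)) by (apply Rmult_le_pos; nra). nra. }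
  assert (E2 : / ((N + 1) * (N + 1)) <= / (N * (N + 1))).
  { apply Rinv_le_contravar; nra. }
  lra. Qed.

Lemma S_term_bound q t r n : (1 <= t)%nat -> (2 <= q + Z.of_nat t)%Z ->
  Rabs (S_term q t r n) <= H (S n) 1 / (INR (S n) * INR (S n)).
Proof. intros Ht Hq. unfold S_term. set (N := INR (S n)).
  assert (HN : 1 <= N) by (unfold N; rewrite S_INR; pose proof (pos_INR n); lra).
  assert (Hr : 0 <= INR r) by apply pos_INR.
  assert (HNt : N <= N ^ t) by (rewrite <- (pow_1 N) at 1; apply Rle_pow; auto).
  assert (HD : 0 < N ^ t * (N + INR r)) by (apply Rmult_lt_0_compat; lra).
  unfold Rdiv. rewrite Rabs_mult, Rabs_mult, pow_1_abs, Rmult_1_l.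
  rewrite (Rabs_right (H (S n) q)) by (apply Rle_ge, H_nonneg).
  rewrite Rabs_right by (apply Rle_ge; left; apply Rinv_0_lt_compat; auto).
  fold (H (S n) q / (N ^ t * (N + INR r))). apply div_le_helper; try nra.
  pose proof (H1_ge1 n) as HH. pose proof (H_nonneg (S n) q) as Hnn.
  destruct (Z_le_gt_dec 1 q) as [Hq1|Hq1].
  - assert (HqH : H (S n) q <= H (S n) 1).
    { unfold H. apply sumR_le. intros i Hi. rewrite powerRZ_m1.
      replace q with (Z.of_nat (S (Z.to_nat q - 1))) by lia.
      rewrite powerRZ_neg', <- pow_powerRZ. apply Rinv_le_contravar. apply lt_0_INR; lia.
      rewrite <- (pow_1 (INR i)) at 1. apply Rle_pow. apply (le_INR 1); lia. lia. }
    apply Rmult_le_compat; try nra.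
  - set (a := Z.to_nat (- q)).
    assert (HqH : H (S n) q <= N * N ^ a).
    { unfold H, N. rewrite <- sumR_const1. apply sumR_le. intros i Hi.
      replace (- q)%Z with (Z.of_nat a) by (unfold a; lia). rewrite <- pow_powerRZ.
      apply pow_incr. split. apply pos_INR. apply le_INR; lia. }
    assert (Hpow : N * N ^ a <= N ^ (t - 1)).
    { change (N * N ^ a) with (N ^ (S a)). apply Rle_pow; auto. unfold a; lia. }
    assert (Ht1 : N ^ (t - 1) * N = N ^ t).
    { replace t with (S (t - 1)) at 2 by lia. simpl. ring. }
    assert (0 <= N ^ (t-1)) by (apply pow_le; lra).
    nra.
Qed.

Lemma ww_decr n : ww (S n) <= ww n.
Proof. assert (E := ww_diff n). set (N := INR (S n)) in *.
  assert (HN : 1 <= N) by (unfold N; rewrite S_INR; pose proof (pos_INR n); lra).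
  rewrite (S_INR (S n)) in E. fold N in E. pose proof (H1_ge1 n) as HH.
  assert (/ ((N + 1) * (N + 1)) <= H (S n) 1 / (N * (N + 1))).
  { replace (/ ((N + 1) * (N + 1))) with (1 / ((N + 1) * (N + 1))) by (field; lra).
    apply div_le_helper; nra. }
  lra. Qed.

Lemma ww_pos n : 0 <= ww n.
Proof. unfold ww. apply Rmult_le_pos. apply H_nonneg. left; apply Rinv_0_lt_compat, lt_0_INR; lia. Qed.

Lemma vv_decr n : vv (S n) <= vv n.
Proof. assert (E := vv_diff n). assert (0 < INR (S n) * INR (S (S n))) by (apply Rmult_lt_0_compat; apply lt_0_INR; lia).
  assert (0 < / (INR (S n) * INR (S (S n)))) by (apply Rinv_0_lt_compat; auto). lra. Qed.

Lemma vv_pos n : 0 <= vv n.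
Proof. unfold vv. left; apply Rinv_0_lt_compat, lt_0_INR; lia. Qed.

Lemma S_ex q t r : (1 <= t)%nat -> (2 <= q + Z.of_nat t)%Z -> ex_series (S_term q t r).
Proof. intros Ht Hq.
  apply (@ex_series_le R_AbsRing R_CompleteNormedModule _ (fun n => 2 * (ww n - ww (S n)) + 2 * (vv n - vv (S n)))).
  - intros n. change (Rabs (S_term q t r n) <= 2 * (ww n - ww (S n)) + 2 * (vv n - vv (S n))).
    eapply Rle_trans. apply S_term_bound; auto. apply bound_main.
  - apply (ex_series_plus (fun n => 2 * (ww n - ww (S n))) (fun n => 2 * (vv n - vv (S n)))).
    + apply (ex_series_scal 2 (fun n => ww n - ww (S n))). apply tele_ex. apply ww_decr. apply ww_pos.
    + apply (ex_series_scal 2 (fun n => vv n - vv (S n))). apply tele_ex. apply vv_decr. apply vv_pos.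
Qed.

Lemma is_series_zero : is_series (fun _ : nat => 0) 0.
Proof. change (is_lim_seq (sum_n (fun _ : nat => 0)) 0).
  apply (is_lim_seq_ext (fun _ => 0)). intros n. induction n. rewrite sum_O; auto.
  rewrite sum_Sn, <- IHn. change plus with Rplus. simpl. ring. apply is_lim_seq_const. Qed.

Lemma is_series_plusR a b la lb : is_series a la -> is_series b lb ->
  is_series (fun n => a n + b n) (la + lb).
Proof. intros Ha Hb. apply (is_series_plus a b la lb Ha Hb). Qed.

Lemma is_series_extR (a b : nat -> R) (l : R) : (forall n, a n = b n) -> is_series a l -> is_series b l.
Proof. intros E Ha. apply (is_series_ext a b l E Ha). Qed.

Lemma is_series_scalR c a l : is_series a l -> is_series (fun n => c * a n) (c * l).
Proof. intros Ha. apply (is_series_scal c a l Ha). Qed.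

Lemma is_series_sumN (F : nat -> nat -> R) (L : nat -> R) lo c :
  (forall i, (lo <= i < lo + c)%nat -> is_series (F i) (L i)) ->
  is_series (fun n => sumN (fun i => F i n) lo c) (sumN L lo c).
Proof. revert lo; induction c; intros lo Hi; simpl.
  apply is_series_zero. apply is_series_plusR. apply Hi; lia. apply IHc. intros; apply Hi; lia. Qed.

Lemma is_series_sumR (F : nat -> nat -> R) (L : nat -> R) lo hi :
  (forall i, (lo <= i <= hi)%nat -> is_series (F i) (L i)) ->
  is_series (fun n => sumR lo hi (fun i => F i n)) (sumR lo hi L).
Proof. intros Hi. apply is_series_sumN. intros; apply Hi; lia. Qed.

Lemma hyperH_expand p s N : (1 <= s)%nat ->
  hyperH p s N = sumR 0 (s - 1) (fun l1 => sumR 0 (s - 1 - l1) (fun l2 =>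
     a s l1 l2 * INR N ^ l2 * H N (p - Z.of_nat l1))).
Proof. intros Hs. unfold hyperH. rewrite lemA. unfold RS, a. apply sumR_ext. intros l1 Hl1.
  symmetry. apply sumR_extend. lia. intros i Hi. rewrite a0_zero by lia. ring. Qed.

Theorem theorem2 (s p m k : nat)
  (hs : (1 <= s)%nat) (hp : (1 <= p)%nat) (hm : (1 <= m)%nat) (hk : (1 <= k)%nat)
  (hms : (s <= m)%nat) :
  is_series
    (fun n : nat => let N := S n in
       (-1) ^ (N + 1) * hyperH (Z.of_nat p) s N / (INR N ^ m * binomR (N + k) k))
    (sumR 0 (s - 1) (fun l1 =>
       sumR 0 (s - 1 - l1) (fun l2 =>
         a s l1 l2 *
         sumR 1 k (fun r =>
           (-1) ^ (r + 1) * INR r * binomR k r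
           * Sser (Z.of_nat p - Z.of_nat l1) (m - l2) r)))).
Proof.
  apply (is_series_extR (fun n => sumR 0 (s - 1) (fun l1 => sumR 0 (s - 1 - l1) (fun l2 =>
     a s l1 l2 * sumR 1 k (fun r => (-1) ^ (r + 1) * INR r * binomR k r
           * S_term (Z.of_nat p - Z.of_nat l1) (m - l2) r n))))).
  - intros n. cbv zeta. set (N := S n).
    assert (HN : 0 < INR N) by (apply lt_0_INR; unfold N; lia).
    assert (HB : 0 < binomR (N + k) k) by (apply binomR_pos; lia).
    assert (HNm : 0 < INR N ^ m) by (apply pow_lt; auto).
    transitivity ((-1) ^ (N + 1) / INR N ^ m * hyperH (Z.of_nat p) s N * / binomR (N + k) k).
    2:{ unfold Rdiv. rewrite Rinv_mult. ring. }
    rewrite lemC by auto. rewrite hyperH_expand by auto.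
    set (S2 := sumR 1 k _). set (c := (-1) ^ (N + 1) / INR N ^ m).
    rewrite <- (sumR_scal c _ 0 (s-1)), <- (sumR_scal_r S2 _ 0 (s-1)). apply sumR_ext. intros l1 Hl1.
    rewrite <- (sumR_scal c _ 0 (s-1-l1)), <- (sumR_scal_r S2 _ 0 (s-1-l1)). apply sumR_ext. intros l2 Hl2.
    unfold S2. rewrite <- !sumR_scal. apply sumR_ext. intros r Hr. unfold c.
    unfold S_term. fold N.
    replace (INR N ^ m) with (INR N ^ l2 * INR N ^ (m - l2)) by (rewrite <- pow_add; f_equal; lia).
    assert (0 < INR N ^ l2) by (apply pow_lt; auto).
    assert (0 < INR N ^ (m - l2)) by (apply pow_lt; auto).
    assert (0 <= INR r) by apply pos_INR.
    field. repeat split; lra.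
  - apply is_series_sumR. intros l1 Hl1. apply is_series_sumR. intros l2 Hl2.
    apply is_series_scalR. apply is_series_sumR. intros r Hr. apply is_series_scalR.
    unfold Sser. apply Series_correct. apply S_ex; lia.
Qed.
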